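(* Let $L$ be a Lie algebra over $\Phi$ and let $I$ be an ideal of $L$ which is strongly non-degenerate as a Lie algebra. Then: (i) $\mathrm{Ann}_L(I)=\mathrm{QAnn}_L(I)$; (ii) if $\mathrm{Ann}_L(I)=0$, then $L$ is strongly non-degenerate.
   Context: $\Phi$ is a unital commutative ring in which $2$ and $3$ are invertible; all algebras are $\Phi$-modules. An element $x$ of a Lie algebra $M$ is an absolute zero divisor if $[x,[x,M]]=0$; $M$ is strongly non-degenerate if it has no non-zero absolute zero divisors. For subsets $X,Y$ of a Lie algebra, $\mathrm{Ann}_X(Y)=\{x\in X: [x,Y]=0\}$ and $\mathrm{QAnn}_X(Y)=\{x\in X: [x,[x,Y]]=0\}$. *)

(* Defs.v *)
From HB Require Import structures.
From mathcomp Require Import all_boot all_order all_algebra.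
Set Implicit Arguments. Unset Strict Implicit. Unset Printing Implicit Defensive.
Import GRing.Theory.
Local Open Scope ring_scope.

Definition is_lie_bracket (R : comPzRingType) (L : lmodType R)
    (br : L -> L -> L) : Prop :=
  [/\ (forall (a : R) (x y z : L), br (a *: x + y) z = a *: br x z + br y z),
      (forall (a : R) (x y z : L), br x (a *: y + z) = a *: br x y + br x z),
      (forall x : L, br x x = 0) &
      (forall x y z : L, br x (br y z) + br y (br z x) + br z (br x y) = 0)].

Definition is_lie_ideal (R : comPzRingType) (L : lmodType R)
    (br : L -> L -> L) (I : L -> Prop) : Prop :=
  [/\ I 0,
      (forall x y, I x -> I y -> I (x + y)),
      (forall (a : R) x, I x -> I (a *: x)) &
      (forall x y, I y -> I (br x y))].

Definition Ann (R : comPzRingType) (L : lmodType R) (br : L -> L -> L)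
    (X Y : L -> Prop) : L -> Prop :=
  fun x => X x /\ (forall y, Y y -> br x y = 0).
Definition QAnn (R : comPzRingType) (L : lmodType R) (br : L -> L -> L)
    (X Y : L -> Prop) : L -> Prop :=
  fun x => X x /\ (forall y, Y y -> br x (br x y) = 0).

(* The Lie algebra S (a subalgebra of (L, br), with the inherited bracket;
   e.g. an ideal, or the whole of L) is strongly non-degenerate: its only
   absolute zero divisor is 0. *)
Definition strongly_nondegenerate (R : comPzRingType) (L : lmodType R)
    (br : L -> L -> L) (S : L -> Prop) : Prop :=
  forall x, S x -> (forall y, S y -> br x (br x y) = 0) -> x = 0.

(* Main.v *)
Require Import Defs.
From HB Require Import structures.
From mathcomp Require Import all_boot all_order all_algebra.
Import GRing.Theory.
Local Open Scope ring_scope.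
Set Implicit Arguments. Unset Strict Implicit.

Lemma brDl (R : comPzRingType) (L : lmodType R) (br : L -> L -> L) :
  is_lie_bracket br -> forall x y z, br (x + y) z = br x z + br y z.
Proof. by case=> H1 _ _ _ x y z; have := H1 1 x y z; rewrite !scale1r. Qed.
Lemma brDr (R : comPzRingType) (L : lmodType R) (br : L -> L -> L) :
  is_lie_bracket br -> forall x y z, br x (y + z) = br x y + br x z.
Proof. by case=> _ H1 _ _ x y z; have := H1 1 x y z; rewrite !scale1r. Qed.
Lemma br0l (R : comPzRingType) (L : lmodType R) (br : L -> L -> L) :
  is_lie_bracket br -> forall z, br 0 z = 0.
Proof.
move=> Hb z; have := brDl Hb 0 0 z; rewrite addr0 => H.
by apply: (@addrI _ (br 0 z)); rewrite addr0 -H.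
Qed.
Lemma br0r (R : comPzRingType) (L : lmodType R) (br : L -> L -> L) :
  is_lie_bracket br -> forall z, br z 0 = 0.
Proof.
move=> Hb z; have := brDr Hb z 0 0; rewrite addr0 => H.
by apply: (@addrI _ (br z 0)); rewrite addr0 -H.
Qed.
Lemma brNl (R : comPzRingType) (L : lmodType R) (br : L -> L -> L) :
  is_lie_bracket br -> forall x z, br (- x) z = - br x z.
Proof.
by move=> Hb x z; apply/eqP; rewrite -addr_eq0 -(brDl Hb) addNr (br0l Hb).
Qed.
Lemma brNr (R : comPzRingType) (L : lmodType R) (br : L -> L -> L) :
  is_lie_bracket br -> forall x z, br z (- x) = - br z x.
Proof.
by move=> Hb x z; apply/eqP; rewrite -addr_eq0 -(brDr Hb) addNr (br0r Hb).
Qed.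
Lemma brBl (R : comPzRingType) (L : lmodType R) (br : L -> L -> L) :
  is_lie_bracket br -> forall x y z, br (x - y) z = br x z - br y z.
Proof. by move=> Hb x y z; rewrite (brDl Hb) (brNl Hb). Qed.
Lemma brBr (R : comPzRingType) (L : lmodType R) (br : L -> L -> L) :
  is_lie_bracket br -> forall x y z, br z (x - y) = br z x - br z y.
Proof. by move=> Hb x y z; rewrite (brDr Hb) (brNr Hb). Qed.
Lemma brA (R : comPzRingType) (L : lmodType R) (br : L -> L -> L) :
  is_lie_bracket br -> forall x y, br x y = - br y x.
Proof.
move=> Hb x y; have [_ _ H3 _] := Hb.
have := H3 (x + y); rewrite (brDl Hb) !(brDr Hb) !H3 add0r addr0.
by move/eqP; rewrite addr_eq0 => /eqP.
Qed.
Lemma brDer (R : comPzRingType) (L : lmodType R) (br : L -> L -> L) :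
  is_lie_bracket br -> forall x a b, br x (br a b) = br (br x a) b + br a (br x b).
Proof.
move=> Hb x a b; have [_ _ _ H4] := Hb.
have := H4 x a b.
rewrite (brA Hb b x) (brNr Hb) (brA Hb b (br x a)) => /eqP.
rewrite -addrA -opprD addr_eq0 opprK => /eqP ->; by rewrite addrC.
Qed.

Lemma zmodA (V : zmodType) (A B C : V) :
  B + B = - ((A - B) - (B - C)) + A + C.
Proof.
rewrite !opprD !opprK !addrA (addrAC _ A C) subrK addrC !addrA subrr add0r //.
Qed.
Lemma zmodB (V : zmodType) (e k : V) :
  e + e = - k - e -> - e + - e = - k + e -> k + k = 0.
Proof.
move=> H1 H2.
have : (e + e) + (- e + - e) = (- k - e) + (- k + e) by rewrite H1 H2.
rewrite addrACA !subrr addr0 addrACA addNr addr0 => /esym/eqP.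
by rewrite -opprD oppr_eq0 => /eqP.
Qed.

Lemma pol6 (V : zmodType) (A B : V) :
  (A + A + B) + (A + B + B) = 0 -> (- A - A + B) + (- A + B + B) = 0 -> A *+ 6 = 0.
Proof.
move=> H1 H2.
have E : (A + A + B) + (A + B + B) - ((- A - A + B) + (- A + B + B)) = A *+ 6.
  rewrite !opprD !opprK addrACA.
  rewrite (addrACA (A + A)) subrr addr0.
  rewrite (addrACA (A + B) B) subrr addr0 (addrACA A B) subrr addr0.
  by rewrite !mulrS mulr0n addr0 !addrA.
by rewrite -E H1 H2 subrr.
Qed.


Definition mm (L : Type) (br : L -> L -> L) (x a b c : L) := br (br x a) (br b (br x c)).

Lemma qann_step (R : comPzRingType) (L : lmodType R) (br : L -> L -> L) (I : L -> Prop)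
  (Hb : is_lie_bracket br) (HI : is_lie_ideal br I)
  (two : exists t : R, 2%:R * t = 1) (x : L)
  (Hx : forall w, I w -> br x (br x w) = 0) :
  [/\ (forall a b, I a -> I b -> br (br x a) (br x b) = 0),
      (forall a b c, I a -> I b -> I c -> br (br x a) (br (br x c) b) = - mm br x a c b),
      (forall a b c, I b -> I c -> mm br x a b c = br x (br a (br b (br x c)))),
      (forall a b c, I a -> I b -> I c -> mm br x a b c = mm br x b a c) &
      ((forall a b c, I a -> I c -> mm br x a b c = mm br x c b a) /\
      (forall a c w, I a -> I c -> br (br x a) (br (br x c) w) = br (br x c) (br (br x a) w)))].
Proof.
have [I0 ID IZ IR] := HI.
have cancel2 : forall v : L, v + v = 0 -> v = 0.
  move=> v Hv; case: two => t Ht.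
  by rewrite -[v]scale1r -Ht mulrC -scalerA scaler_nat mulr2n Hv scaler0.
have IL : forall a b, I a -> I (br a b).
  move=> a b Ia; rewrite (brA Hb) -scaleN1r; apply: IZ; exact: IR.
have F1 : forall a b, I a -> I b -> br (br x a) (br x b) = 0.
  move=> a b Ia Ib; apply: cancel2.
  have := Hx (br a b) (IL _ _ Ia).
  rewrite (brDer Hb x a b) (brDr Hb) (brDer Hb x (br x a) b) (brDer Hb x a (br x b)).
  rewrite (Hx a Ia) (Hx b Ib) (br0l Hb) (br0r Hb) add0r addr0.
  by [].
have K1 : forall a b c, I a -> I b -> I c -> br (br x a) (br (br x c) b) = - mm br x a c b.
  move=> a b c Ia Ib Ic.
  have E : br (br x c) b = br x (br c b) - br c (br x b).
    by rewrite (brDer Hb x c b) addrK.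
  by rewrite E (brBr Hb) F1 ?sub0r //; apply: IL.
have K2 : forall a b c, I b -> I c -> mm br x a b c = br x (br a (br b (br x c))).
  move=> a b c Ib Ic.
  rewrite (brDer Hb x a) (brDer Hb x b) F1 // (Hx c Ic) (br0r Hb) add0r (br0r Hb) addr0 //.
have S1 : forall a b c, I a -> I b -> I c -> mm br x a b c = mm br x b a c.
  move=> a b c Ia Ib Ic; rewrite !K2 //.
  rewrite (brDer Hb a b (br x c)) (brDr Hb) (brDer Hb x (br a b) (br x c)).
  by rewrite F1 ?(Hx c Ic) ?(br0r Hb) ?add0r //; apply: IL.
have S2 : forall a b c, I a -> I c -> mm br x a b c = mm br x c b a.
  move=> a b c Ia Ic; rewrite /mm (brDer Hb (br x a) b (br x c)) F1 // (br0r Hb) addr0.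
  by rewrite (brA Hb) (brA Hb b) (brNr Hb).
have Cm : forall a c w, I a -> I c -> br (br x a) (br (br x c) w) = br (br x c) (br (br x a) w).
  by move=> a c w Ia Ic; rewrite (brDer Hb (br x a)) F1 // (br0l Hb) add0r.
by split.
Qed.


Lemma qann_cubic (R : comPzRingType) (L : lmodType R) (br : L -> L -> L) (I : L -> Prop)
  (Hb : is_lie_bracket br) (HI : is_lie_ideal br I) (HN : strongly_nondegenerate br I)
  (two : exists t : R, 2%:R * t = 1) (x : L)
  (Hx : forall w, I w -> br x (br x w) = 0) y : I y ->
  br (br x y) (br (br x y) y) = 0.
Proof.
move=> Iy.
have [F1 K1 K2 S1 [S2 Cm]] := qann_step Hb HI two Hx.
have [I0 ID IZ IR] := HI.
have cancel2 : forall v : L, v + v = 0 -> v = 0.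
  move=> v Hv; case: two => t Ht.
  by rewrite -[v]scale1r -Ht mulrC -scalerA scaler_nat mulr2n Hv scaler0.
have IL : forall a b, I a -> I (br a b).
  move=> a b Ia; rewrite (brA Hb) -scaleN1r; apply: IZ; exact: IR.
have IN : forall a, I a -> I (- a) by move=> a Ia; rewrite -scaleN1r; apply: IZ.
set u := br x y.
have Iu : I u by apply IR.
have Du : br x u = 0 by apply: Hx.
have U2 : forall w, I w -> br u (br u w) = - mm br x y y w by move=> w Iw; apply: K1.
have U3 : forall w, I w -> br u (br u (br u w)) = 0.
  move=> w Iw; rewrite U2; last by apply IR.
  rewrite K2 //; last by apply IR.
  by rewrite (brDer Hb x u w) Du (br0l Hb) add0r F1 // !(br0r Hb) oppr0.
set n := br u (br u y).
have In : I n by apply: (IR _ _ (IR _ _ Iy)).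
set s := br y (br y u).
have Is : I s by apply: (IR _ _ (IR _ _ Iu)).
have En : n = br x (- s).
  by rewrite /n U2 // K2 // -(brNr Hb).
have Isig : I (- s) by apply: IN.
have Cnu : forall w, br n (br u w) = br u (br n w).
  by move=> w; rewrite En Cm.
have Ea : forall w, I w -> br u (br u (br y (br u w))) = - br u (br y (br u (br u w))).
  move=> w Iw; rewrite U2; last by apply IR; apply IR.
  rewrite /mm -/u (brDer Hb x y (br u w)) -/u (brDer Hb x u w) Du (br0l Hb) add0r.
  by rewrite F1 // (br0r Hb) addr0.
have Eb : forall a, br u (br y (br u a)) + br u (br y (br u a))
     = - br n a + br u (br u (br y a)) + br y (br u (br u a)).
  move=> a.
  have adh : forall p q c, br (br p q) c = br p (br q c) - br q (br p c).
    by move=> p q c; rewrite (brDer Hb p q c) addrK.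
  rewrite /n (adh u (br u y) a) (adh u y a) (adh u y (br u a)) (brBr Hb).
  exact: zmodA.
have NU : forall w, I w -> br n (br u w) = 0.
  move=> w Iw; apply: cancel2.
  set e := br u (br y (br u (br u w))).
  apply: (@zmodB _ e).
    have := Eb (br u w); rewrite -/e Ea // U3 // (br0r Hb) addr0 => ->.
    by rewrite -/e.
  have := congr1 (br u) (Eb w).
  rewrite !(brDr Hb) (brNr Hb) U3 ?(br0r Hb) ?(brNr Hb) ?addr0; last by apply IR.
  rewrite Ea // -/e -Cnu => ->.
  by [].
have adh : forall p q c, br (br p q) c = br p (br q c) - br q (br p c).
  by move=> p q c; rewrite (brDer Hb p q c) addrK.
have Nn : forall w, I w -> br n (br n w) = 0.
  move=> w Iw.
  have Iyw : I (br y w) by apply IR.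
  rewrite {2}/n (adh u (br u y) w) (adh u y w) (adh u y (br u w)).
  rewrite !(brBr Hb) !NU //; try by repeat apply IR.
  rewrite subrr !sub0r opprK.
  have It : I (br y (br y (br x w))) by apply IR; apply IR; apply IR.
  rewrite U2 // K2 // (brNr Hb) (brNr Hb) En.
  have -> : br (br x (- s)) (br y (br x (br y (br y (br x w)))))
     = mm br x (- s) y (br y (br y (br x w))) by [].
  rewrite S1 //.
  have := K1 y (br y (br y (br x w))) (- s) Iy It Isig.
  by rewrite -En -/u -Cnu NU // => ->.
exact: (HN n In Nn).
Qed.


Lemma qann_ann (R : comPzRingType) (L : lmodType R) (br : L -> L -> L) (I : L -> Prop)
  (Hb : is_lie_bracket br) (HI : is_lie_ideal br I) (HN : strongly_nondegenerate br I)
  (two : exists t : R, 2%:R * t = 1) (three : exists t : R, 3%:R * t = 1) (x : L)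
  (Hx : forall w, I w -> br x (br x w) = 0) z : I z -> br x z = 0.
Proof.
move=> Iz.
have [F1 K1 K2 S1 [S2 Cm]] := qann_step Hb HI two Hx.
have [I0 ID IZ IR] := HI.
have IN : forall a, I a -> I (- a) by move=> a Ia; rewrite -scaleN1r; apply: IZ.
have f0 : forall y, I y -> mm br x y y y = 0.
  move=> y Iy; have := K1 y y y Iy Iy Iy; rewrite (qann_cubic Hb HI HN two Hx Iy) => /esym/eqP.
  by rewrite oppr_eq0 => /eqP.
have mD1 : forall a a' b c, mm br x (a + a') b c = mm br x a b c + mm br x a' b c.
  by move=> a a' b c; rewrite /mm (brDr Hb x a a') (brDl Hb).
have mD2 : forall a b b' c, mm br x a (b + b') c = mm br x a b c + mm br x a b' c.
  by move=> a b b' c; rewrite /mm (brDl Hb b b') (brDr Hb).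
have mD3 : forall a b c c', mm br x a b (c + c') = mm br x a b c + mm br x a b c'.
  by move=> a b c c'; rewrite /mm (brDr Hb x c c') (brDr Hb b) (brDr Hb (br x a)).
have mN1 : forall a b c, mm br x (- a) b c = - mm br x a b c.
  by move=> a b c; rewrite /mm !(brNr Hb) (brNl Hb).
have mN2 : forall a b c, mm br x a (- b) c = - mm br x a b c.
  by move=> a b c; rewrite /mm (brNl Hb) (brNr Hb).
have mN3 : forall a b c, mm br x a b (- c) = - mm br x a b c.
  by move=> a b c; rewrite /mm !(brNr Hb).
have six : forall v : L, v *+ 6 = 0 -> v = 0.
  move=> v Hv; case: two => t Ht; case: three => t' Ht'.
  have H6 : (6%:R : R) * (t * t') = 1.
    by rewrite (natrM R 2 3) mulrACA Ht Ht' mulr1.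
  by rewrite -[v]scale1r -H6 mulrC -scalerA scaler_nat Hv scaler0.
have Pz : forall w, I w -> mm br x z z w = 0.
  move=> w Iw.
  have Imw := IN w Iw.
  have H1 := f0 (z + w) (ID _ _ Iz Iw).
  have H2 := f0 (z + - w) (ID _ _ Iz Imw).
  rewrite !mD1 !mD2 !mD3 in H1.
  rewrite !mD1 !mD2 !mD3 !mN1 !mN2 !mN3 !opprK in H2.
  rewrite (f0 z Iz) (f0 w Iw) in H1 H2.
  have e1 : mm br x z w z = mm br x z z w by rewrite S1 // S2.
  have e2 : mm br x w z z = mm br x z z w by rewrite S2.
  have e3 : mm br x w z w = mm br x z w w by rewrite S1.
  have e4 : mm br x w w z = mm br x z w w by rewrite S2.
  rewrite e1 e2 e3 e4 add0r addr0 !addrA in H1.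
  rewrite e1 e2 e3 e4 sub0r subr0 !addrA in H2.
  apply: six; apply: (@pol6 _ _ (mm br x z w w)); rewrite !addrA //.
apply: (HN _ (IR _ _ Iz)) => w Iw.
by rewrite (K1 z w z Iz Iw Iz) (Pz w Iw) oppr0.
Qed.

Theorem proposition2p3 (R : comPzRingType) (L : lmodType R)
    (br : L -> L -> L) (I : L -> Prop) :
  (exists t : R, 2%:R * t = 1) ->
  (exists t : R, 3%:R * t = 1) ->
  is_lie_bracket br ->
  is_lie_ideal br I ->
  strongly_nondegenerate br I ->
  (forall x : L, Ann br (fun _ => True) I x <-> QAnn br (fun _ => True) I x) /\
  ((forall x : L, Ann br (fun _ => True) I x -> x = 0) ->
     strongly_nondegenerate br (fun _ => True)).
Proof.
move=> two three Hb HI HN.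
have key : forall x, (forall w, I w -> br x (br x w) = 0) -> forall y, I y -> br x y = 0.
  by move=> x Hx y Iy; apply: (qann_ann Hb HI HN two three Hx).
split.
  move=> x; split.
    by case=> _ H; split=> // y Iy; rewrite (H y Iy) (br0r Hb).
  by case=> _ H; split=> // y Iy; apply: key.
move=> Hann x _ Hx; apply: Hann; split=> //.
by apply: key => w _; apply: Hx.
Qed.
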